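(* Let $\Phi$ be a convex growth function. Then for any $z=x+iy\in \mathbb{C}_+$, the function $$f_z(w):=\Phi^{-1}\left(\frac 1y\right)\frac{y^2}{(w-\bar{z})^2},\quad w\in\mathbb{C}_+,$$ is in $H^\Phi(\mathbb{C}_+)$. Moreover, $\sup_{v>0}\int_{\mathbb{R}}\Phi(|f_z(u+iv)|)du\le \pi$.
   Context: $\mathbb{C}_+=\{x+iy: y>0\}$. A growth function is a continuous nondecreasing function from $[0,\infty)$ onto $[0,\infty)$; $\Phi^{-1}$ is its inverse. $H^\Phi(\mathbb{C}_+)$ is the space of holomorphic $f$ on $\mathbb{C}_+$ with $\sup_{y>0}\inf\{\lambda>0:\int_{\mathbb{R}}\Phi(|f(x+iy)|/\lambda)dx\le1\}<\infty$. *)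

(* Defs.v *)
From HB Require Import structures.
From mathcomp Require Import all_boot all_order all_algebra.
From mathcomp Require Import complex.
From mathcomp Require Import all_classical all_reals all_analysis.
Set Implicit Arguments. Unset Strict Implicit. Unset Printing Implicit Defensive.
Import Order.TTheory GRing.Theory Num.Theory.
Import numFieldNormedType.Exports.
Local Open Scope classical_set_scope.
Local Open Scope ring_scope.
Local Open Scope complex_scope.

Section Defs.
Variable R : realType.

Definition growth_function (Phi : R -> R) : Prop :=
  [/\ {within [set x : R | 0 <= x], continuous Phi},
      (forall a b : R, 0 <= a -> a <= b -> Phi a <= Phi b),
      (forall a : R, 0 <= a -> 0 <= Phi a) &
      (forall t : R, 0 <= t -> exists2 a : R, 0 <= a & Phi a = t)].

Definition convex_on_nonneg (Phi : R -> R) : Prop :=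
  forall (a b t : R), 0 <= a -> 0 <= b -> 0 <= t -> t <= 1 ->
    Phi (t * a + (1 - t) * b) <= t * Phi a + (1 - t) * Phi b.

Definition upper_half_plane : set R[i] := [set w | 0 < complex.Im w].

Definition complex_differentiable_at (f : R[i] -> R[i]) (w : R[i]) : Prop :=
  exists l : R[i], forall eps : R, 0 < eps -> exists2 delta : R, 0 < delta &
    forall h : R[i], h != 0 -> Normc.normc h < delta ->
      Normc.normc ((f (w + h) - f w) / h - l) < eps.

Definition holomorphic_on (D : set R[i]) (f : R[i] -> R[i]) : Prop :=
  forall w, D w -> complex_differentiable_at f w.

Definition lux_line (Phi : R -> R) (f : R[i] -> R[i]) (y : R) : \bar R :=
  ereal_inf [set (lam%:E) | lam in [set lam : R | 0 < lam /\
     (\int[@lebesgue_measure R]_x (Phi (Normc.normc (f (Complex x y)) / lam))%:E <= 1)%E]].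

Definition HPhi (Phi : R -> R) (f : R[i] -> R[i]) : Prop :=
  holomorphic_on upper_half_plane f /\
  (ereal_sup [set lux_line Phi f y | y in [set y : R | (0 < y)%R]] < +oo)%E.

End Defs.

(* Main.v *)
Require Import Defs.
From HB Require Import structures.
From mathcomp Require Import all_boot all_order all_algebra.
From mathcomp Require Import complex.
From mathcomp Require Import all_classical all_reals all_analysis.
From mathcomp Require Import ring lra measurable_realfun.
Import Order.TTheory GRing.Theory Num.Theory.
Import numFieldNormedType.Exports.
Local Open Scope classical_set_scope.
Local Open Scope ring_scope.
Local Open Scope complex_scope.

Section S.
Variable R : realType.
Let mu := @lebesgue_measure R.
Lemma int_oneDsqrV : (\int[mu]_u ((oneDsqr u)^-1)%:E = (pi : R)%:E)%E.
Proof.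
rewrite (@ge0_symfun_integralT _ (fun u : R => (oneDsqr u)^-1)).
- rewrite -set_itvcy integral0y_oneDsqr -EFinM; congr EFin.
  by rewrite mulrC -mulrA mulVf ?mulr1.
- by move=> u; rewrite invr_ge0 ltW // (lt_le_trans ltr01 (oneDsqr_ge1 _)).
- exact: continuous_oneDsqrV.
- by move=> u /=; rewrite /oneDsqr sqrrN.
Qed.

Lemma int_cauchy (a c : R) : 0 < c ->
  (\int[mu]_u (c / ((u - a) ^+ 2 + c ^+ 2))%:E = (pi : R)%:E)%E.
Proof.
move=> c0.
pose F := fun u : R => (u - a) / c.
have dF : derive1 F = cst c^-1.
  apply/funext => u; rewrite derive1E /F.
  by rewrite derive_val /= scaler0 add0r subr0 /GRing.scale /= mulr1.
rewrite -int_oneDsqrV.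
rewrite (@increasing_ge0_integration_by_substitutionT _ F (fun u => (oneDsqr u)^-1)).
- apply: eq_integral => u _; congr EFin; rewrite dF /= /F /oneDsqr.
  have cn0 : c != 0 by rewrite gt_eqF.
  have h1 : (u - a) ^+ 2 + c ^+ 2 != 0.
    by rewrite gt_eqF // ltr_pwDr ?exprn_gt0 ?sqr_ge0.
  have h2 : 1 + ((u - a) / c) ^+ 2 != 0.
    by rewrite gt_eqF // ltr_pwDl ?sqr_ge0.
  transitivity ((1 + ((u - a) / c) ^+ 2)^-1 * c^-1); last by [].
  have -> : 1 + ((u - a) / c) ^+ 2 = ((u - a) ^+ 2 + c ^+ 2) / c ^+ 2.
    by field.
  by field; rewrite cn0 h1.
- move=> u v uv; rewrite /F ltr_pM2r ?invr_gt0 //.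
  by rewrite ltrD2r.
- by rewrite dF => u; exact: cst_continuous.
- by rewrite dF; exact: is_cvg_cst.
- by rewrite dF; exact: is_cvg_cst.
- by move=> u; rewrite /F; exact: ex_derive.
- apply/cvgrNyPle => A; near=> z.
  rewrite /F ler_pdivrMr // lerBlDr.
  near: z; apply: nbhs_ninfty_le; by rewrite num_real.
- apply/cvgryPge => A; near=> z.
  rewrite /F ler_pdivlMr // lerBrDr.
  near: z; apply: nbhs_pinfty_ge; by rewrite num_real.
- exact: continuous_oneDsqrV.
- by move=> u; rewrite invr_ge0 ltW // (lt_le_trans ltr01 (oneDsqr_ge1 _)).
Unshelve. all: end_near.
Qed.
Lemma cont_rat (K m x c : R) : 0 < c ->
  continuous (fun u : R => K / ((u - x) ^+ 2 + c ^+ 2) * m).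
Proof.
move=> c0 u.
apply: cvgMr_tmp; apply: cvgMl_tmp; apply: cvgV.
  by rewrite gt_eqF // ltr_pwDr ?exprn_gt0 ?sqr_ge0.
apply: cvgD; last exact: cvg_cst.
have -> : (fun z : R => (z - x) ^+ 2) = (fun z => (z - x) * (z - x)).
  by apply/funext => z; rewrite expr2.
by apply: cvgM; apply: cvgB; (exact: cvg_id || exact: cvg_cst).
Qed.

Lemma meas_Phi (Phi : R -> R) (h : R -> R) :
  (forall a b : R, 0 <= a -> a <= b -> Phi a <= Phi b) ->
  continuous h -> (forall u, 0 <= h u) ->
  measurable_fun setT (fun u => Phi (h u)).
Proof.
move=> mono ch h0.
pose P' := fun t : R => Phi (Num.max t 0).
have -> : (fun u => Phi (h u)) = P' \o h.
  by apply/funext => u; rewrite /P' /= max_l.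
apply: measurableT_comp; last exact: continuous_measurable_fun.
apply: nondecreasing_measurable => // a b ab.
by apply: mono; [rewrite le_max lexx orbT | rewrite le_max2].
Qed.
Import Normc.
Lemma normc_ge0 (z : R[i]) : 0 <= normc z.
Proof. by case: z => a b; rewrite /normc sqrtr_ge0. Qed.

Lemma normc_gt0 (z : R[i]) : z != 0 -> 0 < normc z.
Proof.
move=> z0; rewrite lt_neqAle normc_ge0 andbT eq_sym.
by apply/eqP => /eq0_normc; apply/eqP.
Qed.

Lemma normcX (z : R[i]) n : normc (z ^+ n) = normc z ^+ n.
Proof.
elim: n => [|n IH]; first by rewrite !expr0 normc1.
by rewrite !exprS normcM IH.
Qed.

Lemma diff_inv_sqr (K c0 w : R[i]) : w - c0 != 0 ->
  complex_differentiable_at (fun w => K / (w - c0) ^+ 2) w.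
Proof.
move=> dn0; set d := w - c0.
exists (- (K *+ 2) / d ^+ 3) => eps eps0.
set nd := normc d; set nK := normc K.
have nd0 : 0 < nd by exact: normc_gt0.
exists (Num.min (nd / 2) (eps * nd ^+ 4 / (16 * nK + 1))).
  rewrite lt_min divr_gt0 //= divr_gt0 ?mulr_gt0 ?exprn_gt0 //.
  by rewrite ltr_pwDr // mulr_ge0 // normc_ge0.
move=> h h0; rewrite lt_min => /andP[hd1 hd2].
have ndh : nd / 2 <= normc (d + h).
  have := le_normcD (d + h) (- h); rewrite normcN addrK -/nd.
  by move: hd1; lra.
have dh0 : d + h != 0.
  apply/eqP => dh; move: ndh; rewrite dh normc0; move: nd0; lra.
have -> : w + h - c0 = d + h by rewrite /d addrAC.
have -> : (K / (d + h) ^+ 2 - K / d ^+ 2) / h - - (K *+ 2) / d ^+ 3 =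
          K * h * (d *+ 3 + h *+ 2) / (d ^+ 3 * (d + h) ^+ 2).
  by field; rewrite h0 dh0 dn0.
rewrite !normcM normcV !normcM -/nd -/nK.
set q := normc (d + h); set b := normc h; set N3 := normc (d *+ 3 + h *+ 2).
have -> : nd * (nd * nd) = nd ^+ 3 by rewrite !exprS expr0 mulr1.
rewrite -expr2.
have b0 : 0 < b by exact: normc_gt0.
have nK0 : 0 <= nK by exact: normc_ge0.
have hN3 : N3 <= nd *+ 4.
  apply: (le_trans (le_normcD _ _)); rewrite (normcMn d 3) (normcMn h 2) -/nd -/b.
  rewrite [nd *+ 4]mulrSr lerD2l mulr2n.
  by move: hd1; rewrite -/b; lra.
have q0 : 0 < q by move: nd0 ndh; rewrite -/q; lra.
have B0 : 0 < nd ^+ 3 * q ^+ 2 by rewrite mulr_gt0 ?exprn_gt0.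
rewrite ltr_pdivrMr //.
have h3 : 16 * nK * b < eps * nd ^+ 4.
  move: hd2; rewrite -/b ltr_pdivlMr; last by move: nK0; lra.
  move=> H; apply: le_lt_trans H.
  by rewrite mulrDr mulr1 [b * _]mulrC lerDl ltW.
have q2 : (nd / 2) ^+ 2 <= q ^+ 2.
  by rewrite lerXn2r ?nnegrE //; move: nd0; lra.
have e1 : nK * b * N3 <= nK * b * (nd *+ 4).
  by rewrite ler_wpM2l // mulr_ge0 //; move: b0; lra.
apply: (le_lt_trans e1).
have e2 : eps * (nd ^+ 3 * (nd / 2) ^+ 2) <= eps * (nd ^+ 3 * q ^+ 2).
  rewrite ler_wpM2l ?ler_wpM2l //; first by rewrite ltW.
  by rewrite exprn_ge0 // ltW.
apply: (lt_le_trans _ e2).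
have -> : eps * (nd ^+ 3 * (nd / 2) ^+ 2) = (eps * nd ^+ 4) * nd / 4.
  by field.
have -> : nK * b * (nd *+ 4) = (16 * nK * b) * nd / 4.
  by rewrite -mulr_natr; field.
by rewrite ltr_pM2r ?invr_gt0 // ltr_pM2r.
Qed.
Lemma Phi0 (Phi : R -> R) : growth_function Phi -> Phi 0 = 0.
Proof.
case=> _ mono nonneg onto.
have [a a0 Pa] := onto 0 (lexx 0).
have := mono 0 a (lexx 0) a0; rewrite Pa => H.
by apply/eqP; rewrite eq_le H nonneg.
Qed.

Lemma Phi_scale (Phi : R -> R) t a : growth_function Phi ->
  convex_on_nonneg Phi -> 0 <= t -> t <= 1 -> 0 <= a ->
  Phi (t * a) <= t * Phi a.
Proof.
move=> hg hc t0 t1 a0.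
have := hc a 0 t a0 (lexx 0) t0 t1.
by rewrite mulr0 addr0 (@Phi0 Phi hg) mulr0 addr0.
Qed.

Lemma normc_f (x y s u v : R) : 0 <= s ->
  normc ((s * y ^+ 2)%:C / (Complex u v - conjc (x +i* y)) ^+ 2) =
  s * y ^+ 2 / ((u - x) ^+ 2 + (v + y) ^+ 2).
Proof.
move=> s0.
have -> : Complex u v - conjc (x +i* y) = (u - x) +i* (v + y).
  by apply/eqP; rewrite eq_complex /= opprK !eqxx.
rewrite normcM normcV normcX.
congr (_ / _).
  rewrite /normc /= expr0n /= addr0 sqrtr_sqr ger0_norm //.
  by rewrite mulr_ge0 // sqr_ge0.
by rewrite /normc sqr_sqrtr // addr_ge0 // sqr_ge0.
Qed.
Lemma key (Phi : R -> R) (hg : growth_function Phi) (hc : convex_on_nonneg Phi)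
  (x y : R) (hy : 0 < y) (s : R) (hs0 : 0 <= s) (hs : Phi s = y^-1)
  (v m : R) (v0 : 0 < v) (m0 : 0 < m) (m1 : m <= 1) :
  (\int[mu]_u (Phi (normc ((s * y ^+ 2)%:C / (Complex u v - conjc (x +i* y)) ^+ 2) * m))%:E
    <= (m * pi)%:E)%E.
Proof.
have [_ mono nonneg _] := hg.
under eq_integral do rewrite normc_f //.
set c := v + y.
have c0 : 0 < c by rewrite /c addr_gt0.
have yc : y <= c by rewrite /c lerDr ltW.
have D0 u : 0 < (u - x) ^+ 2 + c ^+ 2.
  by rewrite ltr_pwDr ?exprn_gt0 ?sqr_ge0.
have arg0 u : 0 <= s * y ^+ 2 / ((u - x) ^+ 2 + c ^+ 2) * m.
  apply: mulr_ge0; last exact: ltW.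
  apply: divr_ge0; last exact: ltW (D0 u).
  by rewrite mulr_ge0 ?sqr_ge0.
have pt u : Phi (s * y ^+ 2 / ((u - x) ^+ 2 + c ^+ 2) * m) <=
            m * (c / ((u - x) ^+ 2 + c ^+ 2)).
  have Dn0 := D0 u; set D := (u - x) ^+ 2 + c ^+ 2 in Dn0 *.
  have -> : s * y ^+ 2 / D * m = (m * y ^+ 2 / D) * s.
    by field; rewrite gt_eqF.
  apply: (le_trans (@Phi_scale Phi (m * y ^+ 2 / D) s hg hc _ _ hs0)).
  - by rewrite divr_ge0 ?mulr_ge0 ?sqr_ge0 ?ltW.
  - rewrite ler_pdivrMr // mul1r.
    have h1 : y ^+ 2 <= c ^+ 2 by rewrite lerXn2r ?nnegrE ?(ltW hy) ?(ltW c0).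
    have h2 : m * y ^+ 2 <= y ^+ 2 by rewrite ler_piMl ?sqr_ge0.
    have h3 : c ^+ 2 <= D by rewrite /D lerDr sqr_ge0.
    by apply: (le_trans h2); apply: (le_trans h1).
  - rewrite hs.
    have -> : m * y ^+ 2 / D * y^-1 = m * (y / D).
      by field; rewrite !gt_eqF.
    apply: ler_wpM2l; first exact: ltW.
    by rewrite ler_pM2r ?invr_gt0.
have mf1 : measurable_fun setT
    (fun u : R => (Phi (s * y ^+ 2 / ((u - x) ^+ 2 + c ^+ 2) * m))%:E).
  apply/measurable_EFinP; apply: meas_Phi => //.
  exact: cont_rat.
have mf2 : measurable_fun setT (fun u : R => (c / ((u - x) ^+ 2 + c ^+ 2))).
  apply: continuous_measurable_fun.
  have -> : (fun u : R => c / ((u - x) ^+ 2 + c ^+ 2)) =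
            (fun u : R => c / ((u - x) ^+ 2 + c ^+ 2) * 1).
    by apply/funext => u; rewrite mulr1.
  exact: cont_rat.
apply: (@le_trans _ _ (\int[mu]_u ((m * (c / ((u - x) ^+ 2 + c ^+ 2)))%:E))%E).
  apply: ge0_le_integral => //.
  - by move=> u Hu; rewrite lee_fin nonneg.
  - apply/measurable_EFinP; apply: measurable_funM => //.
  - by move=> u Hu; rewrite lee_fin pt.
under eq_integral do rewrite EFinM.
rewrite ge0_integralZl_EFin.
- by rewrite int_cauchy // -EFinM.
- exact: measurableT.
- by move=> u Hu; rewrite lee_fin divr_ge0 ?(ltW c0) ?(ltW (D0 u)).
- exact/measurable_EFinP.
- exact: ltW.
Qed.
End S.
Theorem lemma3p8 (R : realType) (Phi : R -> R)
  (hgrowth : growth_function Phi) (hconvex : convex_on_nonneg Phi)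
  (x y : R) (hy : 0 < y)
  (s : R) (hs0 : 0 <= s) (hs : Phi s = y^-1) (* s = Phi^{-1}(1/y) *) :
  let f := fun w : R[i] => (s * y ^+ 2)%:C / (w - conjc (x +i* y)) ^+ 2 in
  HPhi Phi f /\
  (ereal_sup [set (\int[@lebesgue_measure R]_u (Phi (Normc.normc (f (Complex u v))))%:E)%E
              | v in [set v : R | (0 < v)%R]] <= (pi : R)%:E)%E.
Proof.
move=> f.
have pi0 : (0 : R) < pi := pi_gt0 R.
split; first split.
- move=> w; case: w => a b /= hb; apply: diff_inv_sqr.
  have -> : a +i* b - conjc (x +i* y) = (a - x) +i* (b + y).
    by apply/eqP; rewrite eq_complex /= opprK !eqxx.
  rewrite eq_complex /= negb_and; apply/orP; right.
  by rewrite gt_eqF // addr_gt0.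
- apply: (@le_lt_trans _ _ ((pi + 1)%:E)); last exact: ltry.
  apply: ge_ereal_sup => _ [v v0 <-].
  apply: ereal_inf_lbound; exists (pi + 1) => //; split.
    by rewrite addr_gt0.
  have pi1 : 0 < (pi + 1 : R)^-1 by rewrite invr_gt0 addr_gt0.
  have pi2 : (pi + 1 : R)^-1 <= 1.
    by rewrite invf_le1; move: pi0; lra.
  apply: le_trans (@key R Phi hgrowth hconvex x y hy s hs0 hs v _ v0 pi1 pi2) _.
  by rewrite lee_fin mulrC ler_pdivrMr; move: pi0; lra.
- apply: ge_ereal_sup => _ [v v0 <-].
  have := @key R Phi hgrowth hconvex x y hy s hs0 hs v _ v0 ltr01 (lexx 1).
  rewrite mul1r; apply: le_trans.
  by rewrite le_eqVlt; apply/orP; left; apply/eqP; apply: eq_integral => u _; rewrite mulr1.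
Qed.
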